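(* Let $r$ be a normalized formal generalized $r$-matrix. Then, with respect to the bilinear form $\kappa_0$ on $\mathfrak g(\!(z)\!)$, one has $\mathfrak g(r)^\perp=\mathfrak g(\bar r)$. Moreover, $r$ is skew-symmetric if and only if $\mathfrak g(r)^\perp=\mathfrak g(r)$.
   Context: $\Bbbk$ is a field of characteristic $0$, $\mathfrak g$ a finite-dimensional semisimple Lie algebra over $\Bbbk$ with Killing form $\kappa$, $\kappa$-orthonormal basis $\{b_i\}_{i=1}^d$ and Casimir $\gamma=\sum_ib_i\otimes b_i$; $\frac1{x-y}=\sum_{k\ge0}x^{-k-1}y^k$. A series $r\in(\mathfrak g\otimes\mathfrak g)(\!(x)\!)[\![y]\!]$ is in normalized standard form if $r=\frac{\gamma}{x-y}+r_0$, $r_0\in(\mathfrak g\otimes\mathfrak g)[\![x,y]\!]$; $\bar r(x,y)=\frac{\gamma}{x-y}-\tau(r_0(y,x))$ ($\tau$ the flip); skew-symmetric means $\bar r=r$. With $s^{ij}$ meaning substitution $(x,y)=(x_i,x_j)$ and placement in tensor positions $i,j$ in $(U(\mathfrak g)^{\otimes3})\otimes\Bbbk(\!(x_1)\!)(\!(x_2)\!)[\![x_3]\!]$, a normalized formal generalized $r$-matrix is such $r$ with $[r^{12},r^{13}]+[r^{12},r^{23}]+[r^{13},\bar r^{23}]=0$. For $s=\sum_{k,i}s_{k,i}(x)\otimes b_iy^k$, $\mathfrak g(s)=\mathrm{span}_\Bbbk\{s_{k,i}(z)\}$. The form $\kappa_0$ on $\mathfrak g(\!(z)\!)$ is $\kappa_0(s,t)=\mathrm{res}_0\kappa(s,t)\,dz=\sum_{k+\ell=-1}\kappa(s_k,t_\ell)$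 for $s=\sum s_kz^k$, $t=\sum t_kz^k$, and $\perp$ denotes orthogonal complement with respect to $\kappa_0$. *)

(* Defs.v *)
From HB Require Import structures.
From mathcomp Require Import all_boot all_order all_algebra.
From Stdlib Require Import ClassicalEpsilon.
Set Implicit Arguments. Unset Strict Implicit. Unset Printing Implicit Defensive.
Import Order.TTheory GRing.Theory Num.Theory.
Local Open Scope ring_scope.

(*  g is a finite-dimensional Lie algebra over k, realised on 'rV[k]_d *)
(*  with bracket br.  g (x) g is realised as 'M[k]_d :  u (x) v is     *)
(*  u^T *m v, so the flip tau is transposition, and an element M of    *)
(*  g(x)g equals  sum_{a,b} M a b  e_a (x) e_b  (e_a standard basis).  *)
(*  g (x) g (x) g is realised as {ffun 'I_d * 'I_d * 'I_d -> k}.       *)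
(*  A series in (g(x)g)((x))[[y]] is given by its coefficient function *)
(*  S : int -> nat -> 'M_d  (S p n = coefficient of x^p y^n).          *)
(*  A series in g((z)) is a function int -> 'rV_d (coefficient of z^p) *)
(*  which is a Laurent series when its support is bounded below.      *)

Section LieDefs.
Variables (k : fieldType) (d : nat).
Variable br : 'rV[k]_d -> 'rV[k]_d -> 'rV[k]_d.

Definition is_lie_bracket : Prop :=
  [/\ (forall (a : k) x y z, br (a *: x + y) z = a *: br x z + br y z),
      (forall (a : k) x y z, br z (a *: x + y) = a *: br z x + br z y),
      (forall x, br x x = 0) &
      (forall x y z, br x (br y z) + br y (br z x) + br z (br x y) = 0)].

Definition span_of (P : 'rV[k]_d -> Prop) (x : 'rV[k]_d) : Prop :=
  exists n (v : 'I_n -> 'rV[k]_d) (c : 'I_n -> k),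
    (forall i, P (v i)) /\ x = \sum_(i < n) c i *: v i.

Definition subspace (P : 'rV[k]_d -> Prop) : Prop :=
  P 0 /\ forall (a : k) x y, P x -> P y -> P (a *: x + y).

Definition ideal (P : 'rV[k]_d -> Prop) : Prop :=
  subspace P /\ forall x y, P y -> P (br x y).

Fixpoint derived (P : 'rV[k]_d -> Prop) (n : nat) : 'rV[k]_d -> Prop :=
  match n with
  | O => P
  | n'.+1 => span_of (fun z => exists x y,
               derived P n' x /\ derived P n' y /\ z = br x y)
  end.

Definition solvable (P : 'rV[k]_d -> Prop) : Prop :=
  exists n, forall x, derived P n x -> x = 0.

Definition semisimple : Prop :=
  forall I, ideal I -> solvable I -> forall x, I x -> x = 0.

Definition killing (x y : 'rV[k]_d) : k :=
  \tr (lin1_mx (br x) *m lin1_mx (br y)).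

Definition ev (i : 'I_d) : 'rV[k]_d := delta_mx 0 i.

Local Notation tens3 := {ffun 'I_d * 'I_d * 'I_d -> k}.

Definition t3 (x : k) (u v w : 'rV[k]_d) : tens3 :=
  [ffun l : 'I_d * 'I_d * 'I_d => x * (u 0 l.1.1 * v 0 l.1.2 * w 0 l.2)].

(* For A = sum A_ab e_a(x)e_b, B = sum B_cd e_c(x)e_d (elements of g(x)g): *)
(* [A^{12}, B^{13}] = sum [e_a,e_c] (x) e_b (x) e_d                     *)
Definition br12_13 (A B : 'M[k]_d) : tens3 :=
  \sum_(a < d) \sum_(b < d) \sum_(c < d) \sum_(e < d)
     t3 (A a b * B c e) (br (ev a) (ev c)) (ev b) (ev e).
(* [A^{12}, B^{23}] = sum e_a (x) [e_b,e_c] (x) e_d *)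
Definition br12_23 (A B : 'M[k]_d) : tens3 :=
  \sum_(a < d) \sum_(b < d) \sum_(c < d) \sum_(e < d)
     t3 (A a b * B c e) (ev a) (br (ev b) (ev c)) (ev e).
(* [A^{13}, B^{23}] = sum e_a (x) e_c (x) [e_b,e_d] *)
Definition br13_23 (A B : 'M[k]_d) : tens3 :=
  \sum_(a < d) \sum_(b < d) \sum_(c < d) \sum_(e < d)
     t3 (A a b * B c e) (ev a) (ev c) (br (ev b) (ev e)).

Variable bas : 'I_d -> 'rV[k]_d.

Definition basmx : 'M[k]_d := \matrix_(i < d) bas i.

Definition casimir : 'M[k]_d := \sum_(i < d) (bas i)^T *m bas i.

Variable r0 : nat -> nat -> 'M[k]_d. (* r0 = sum r0 m n x^m y^n *)

(* coefficient of x^p y^n of  r = gamma/(x-y) + r0(x,y),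
   where gamma/(x-y) = sum_n x^(-n-1) y^n gamma *)
Definition rcoef (p : int) (n : nat) : 'M[k]_d :=
  (if p == - (n.+1)%:Z then casimir else 0)
  + match p with Posz m => r0 m n | Negz _ => 0 end.

(* coefficient of x^p y^n of  rbar = gamma/(x-y) - tau(r0(y,x)) *)
Definition rbarcoef (p : int) (n : nat) : 'M[k]_d :=
  (if p == - (n.+1)%:Z then casimir else 0)
  - match p with Posz m => (r0 n m)^T | Negz _ => 0 end.

(* coefficient of x^p y^q of r for any integer q (zero if q < 0, since
   r lies in (g(x)g)((x))[[y]]) *)
Definition rcoefZ (p q : int) : 'M[k]_d :=
  match q with Posz n => rcoef p n | Negz _ => 0 end.

Definition isum (V : zmodType) (N : nat) (F : int -> V) : V :=
  \sum_(j < (N + N).+1) F (j%:Z - N%:Z).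

(* Normalized formal generalized r-matrix:  for all a b : int, c : nat,
   the coefficient of x1^a x2^b x3^c of
   [r^{12},r^{13}] + [r^{12},r^{23}] + [r^{13},rbar^{23}]
   in (g(x)g(x)g)((x1))((x2))[[x3]] vanishes.  The Cauchy sums are finite;
   the summation windows below contain all possibly nonzero terms:
   - first term : x1-exponents p of r^{12} (whose x2-exponent is b),
                  nonzero only for -(b+1) <= p <= a+c+1;
   - second term: x2-exponents p >= 0 of r^{12}, with b-p >= -(c+1);
   - third term : x3-exponents p >= 0 of r^{13}, c-p >= 0 of rbar^{23}. *)
Definition gen_rmatrix : Prop :=
  forall (a b : int) (c : nat),
    isum (absz a + absz b + c + 2)
         (fun p => br12_13 (rcoefZ p b) (rcoef (a - p) c))
    + \sum_(p < absz b + c + 2) br12_23 (rcoef a p) (rcoef (b - p%:Z) c)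
    + \sum_(p < c.+1) br13_23 (rcoef a p) (rbarcoef b (c - p))
    = 0.

Definition skew_symmetric : Prop :=
  forall p n, rbarcoef p n = rcoef p n.

(* The unique decomposition M = sum_i u_i (x) b_i (M in g(x)g) is
   u_i = column i of M * basmx^{-1}, since sum_i u_i^T b_i = U^T basmx. *)
Definition scomp (S : int -> nat -> 'M[k]_d) (kk : nat) (i : 'I_d)
  : int -> 'rV[k]_d :=
  fun p => \row_(a < d) (S p kk *m invmx basmx) a i.

Definition gsp (S : int -> nat -> 'M[k]_d) (t : int -> 'rV[k]_d) : Prop :=
  exists (N : nat) (c : nat -> 'I_d -> k),
    forall p, t p = \sum_(kk < N) \sum_(i < d) c kk i *: scomp S kk i p.

End LieDefs.

Section Laurent.
Variables (k : fieldType) (d : nat).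

Definition laurent (f : int -> 'rV[k]_d) : Prop :=
  exists N : nat, forall n : int, n < - (N%:Z) -> f n = 0.

(* a lower bound for the support (any, when f is Laurent) *)
Definition lowbound (f : int -> 'rV[k]_d) : nat :=
  epsilon (inhabits 0%N) (fun N : nat => forall n : int, n < - (N%:Z) -> f n = 0).

(* kappa_0(s,t) = res_0 kappa(s,t) dz = sum_{m+l=-1} kappa(s_m, t_l);
   for Laurent s,t only m in [-lowbound s, lowbound t - 1] contribute. *)
Definition kappa0 (br : 'rV[k]_d -> 'rV[k]_d -> 'rV[k]_d)
  (s t : int -> 'rV[k]_d) : k :=
  \sum_(j < lowbound s + lowbound t)
    killing br (s (j%:Z - (lowbound s)%:Z)) (t (- 1 - (j%:Z - (lowbound s)%:Z))).

Definition perp (br : 'rV[k]_d -> 'rV[k]_d -> 'rV[k]_d)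
  (V : (int -> 'rV[k]_d) -> Prop) (t : int -> 'rV[k]_d) : Prop :=
  laurent t /\ forall s, V s -> kappa0 br s t = 0.

End Laurent.

(* Main.v *)
Set Warnings "-all".
Require Import Defs.
From HB Require Import structures.
From mathcomp Require Import all_boot all_order all_algebra.
From Stdlib Require Import ClassicalEpsilon.
From mathcomp Require Import zify.
Set Implicit Arguments. Unset Strict Implicit. Unset Printing Implicit Defensive.
Import Order.TTheory GRing.Theory Num.Theory.
Local Open Scope ring_scope.

Lemma lin1_lin (k : fieldType) (d : nat) (br : 'rV[k]_d -> 'rV[k]_d -> 'rV[k]_d) :
  is_lie_bracket br -> forall a x y,
  lin1_mx (br (a *: x + y)) = a *: lin1_mx (br x) + lin1_mx (br y).
Proof.
case=> H1 _ _ _ a x y; apply/matrixP => i j.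
by rewrite !mxE H1 !mxE.
Qed.

Lemma K_linl (k : fieldType) (d : nat) (br : 'rV[k]_d -> 'rV[k]_d -> 'rV[k]_d) :
  is_lie_bracket br -> forall a x y z,
  killing br (a *: x + y) z = a * killing br x z + killing br y z.
Proof.
move=> Hb a x y z; rewrite /killing lin1_lin // mulmxDl -scalemxAl.
by rewrite mxtraceD mxtraceZ.
Qed.

Lemma K_sym (k : fieldType) (d : nat) (br : 'rV[k]_d -> 'rV[k]_d -> 'rV[k]_d) x y :
  killing br x y = killing br y x.
Proof. by rewrite /killing mxtrace_mulC. Qed.

Lemma K_linr (k : fieldType) (d : nat) (br : 'rV[k]_d -> 'rV[k]_d -> 'rV[k]_d) :
  is_lie_bracket br -> forall a x y z,
  killing br z (a *: x + y) = a * killing br z x + killing br z y.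
Proof. by move=> Hb a x y z; rewrite !(K_sym br z) K_linl. Qed.

Lemma K_addl (k : fieldType) (d : nat) (br : 'rV[k]_d -> 'rV[k]_d -> 'rV[k]_d) :
  is_lie_bracket br -> forall x y z,
  killing br (x + y) z = killing br x z + killing br y z.
Proof. move=> Hb x y z; by rewrite -(scale1r x) (K_linl Hb) mul1r scale1r. Qed.

Lemma K_0l (k : fieldType) (d : nat) (br : 'rV[k]_d -> 'rV[k]_d -> 'rV[k]_d) :
  is_lie_bracket br -> forall z, killing br 0 z = 0.
Proof.
move=> Hb z; have := K_addl Hb 0 0 z; rewrite addr0 => H.
by apply: (addrI (killing br 0 z)); rewrite addr0 -H.
Qed.

Lemma K_0r (k : fieldType) (d : nat) (br : 'rV[k]_d -> 'rV[k]_d -> 'rV[k]_d) :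
  is_lie_bracket br -> forall z, killing br z 0 = 0.
Proof. by move=> Hb z; rewrite K_sym K_0l. Qed.

Lemma K_scalel (k : fieldType) (d : nat) (br : 'rV[k]_d -> 'rV[k]_d -> 'rV[k]_d) :
  is_lie_bracket br -> forall a x z,
  killing br (a *: x) z = a * killing br x z.
Proof. by move=> Hb a x z; rewrite -(addr0 (a *: x)) K_linl // K_0l // addr0. Qed.

Lemma K_scaler (k : fieldType) (d : nat) (br : 'rV[k]_d -> 'rV[k]_d -> 'rV[k]_d) :
  is_lie_bracket br -> forall a x z,
  killing br z (a *: x) = a * killing br z x.
Proof. by move=> Hb a x z; rewrite K_sym K_scalel // K_sym. Qed.

Lemma K_suml (k : fieldType) (d : nat) (br : 'rV[k]_d -> 'rV[k]_d -> 'rV[k]_d) :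
  is_lie_bracket br -> forall n (F : 'I_n -> 'rV[k]_d) z,
  killing br (\sum_(i < n) F i) z = \sum_(i < n) killing br (F i) z.
Proof.
move=> Hb n F z.
by apply: (big_morph (fun x => killing br x z)) => [x y|]; rewrite ?K_addl ?K_0l.
Qed.

Lemma K_sumr (k : fieldType) (d : nat) (br : 'rV[k]_d -> 'rV[k]_d -> 'rV[k]_d) :
  is_lie_bracket br -> forall n (F : 'I_n -> 'rV[k]_d) z,
  killing br z (\sum_(i < n) F i) = \sum_(i < n) killing br z (F i).
Proof.
move=> Hb n F z; rewrite K_sym K_suml //; apply: eq_bigr => i _; exact: K_sym.
Qed.

Definition gram (k : fieldType) (d : nat) (br : 'rV[k]_d -> 'rV[k]_d -> 'rV[k]_d) : 'M[k]_d :=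
  \matrix_(a, b) killing br (delta_mx 0 a) (delta_mx 0 b).

Lemma K_gram (k : fieldType) (d : nat) (br : 'rV[k]_d -> 'rV[k]_d -> 'rV[k]_d) :
  is_lie_bracket br -> forall u v,
  killing br u v = (u *m gram br *m v^T) 0 0.
Proof.
move=> Hb u v; rewrite {1}(row_sum_delta u) {1}(row_sum_delta v) K_suml //.
rewrite [RHS]mxE; under [RHS]eq_bigr => b _ do rewrite [X in X * _]mxE mulr_suml.
rewrite [RHS]exchange_big; apply: eq_bigr => a _.
rewrite K_scalel // K_sumr // mulr_sumr; apply: eq_bigr => b _.
by rewrite K_scaler // !mxE -mulrA [v 0 b * _]mulrC.
Qed.

Lemma K_rowmx (k : fieldType) (d : nat) (br : 'rV[k]_d -> 'rV[k]_d -> 'rV[k]_d) :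
  is_lie_bracket br -> forall m n (A : 'M[k]_(m,d)) (X : 'M[k]_(d,n)) i j,
  killing br (row i A) (\row_a X a j) = (A *m gram br *m X) i j.
Proof.
move=> Hb m0 n0 A X i j; rewrite K_gram // !mxE; apply: eq_bigr => l _.
rewrite !mxE; congr (_ * _); apply: eq_bigr => m _; by rewrite !mxE.
Qed.

Lemma K_mxrow (k : fieldType) (d : nat) (br : 'rV[k]_d -> 'rV[k]_d -> 'rV[k]_d) :
  is_lie_bracket br -> forall (Y C : 'M[k]_d) i j,
  killing br (\row_a Y a i) (row j C) = (Y^T *m gram br *m C^T) i j.
Proof.
move=> Hb Y C i j; rewrite K_gram // !mxE; apply: eq_bigr => l _.
rewrite !mxE; congr (_ * _); apply: eq_bigr => m _; by rewrite !mxE.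
Qed.

Lemma bas_row (k : fieldType) (d : nat) (bas : 'I_d -> 'rV[k]_d) i :
  bas i = row i (basmx bas).
Proof. by rewrite rowK. Qed.

Lemma row_tr (k : fieldType) (d : nat) (C : 'M[k]_d) j :
  \row_a (C^T) a j = row j C.
Proof. by apply/matrixP => ? ?; rewrite !mxE. Qed.

Lemma gram_eq (k : fieldType) (d : nat) (br : 'rV[k]_d -> 'rV[k]_d -> 'rV[k]_d)
  (bas : 'I_d -> 'rV[k]_d) :
  is_lie_bracket br -> basmx bas \in unitmx ->
  (forall i j, killing br (bas i) (bas j) = (i == j)%:R) ->
  gram br = invmx (basmx bas) *m invmx (basmx bas)^T.
Proof.
move=> Hb HU Hon.
have HT : (basmx bas)^T \in unitmx by rewrite unitmx_tr.
have E : basmx bas *m gram br *m (basmx bas)^T = 1%:M.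
  apply/matrixP => i j; have := Hon i j.
  by rewrite (bas_row bas i) (bas_row bas j) -(row_tr _ j) K_rowmx // => ->; rewrite mxE.
rewrite -[gram br](mulKmx HU) -[basmx bas *m gram br](mulmxK HT) E.
by rewrite mul1mx.
Qed.

Lemma pairing (k : fieldType) (d : nat) (br : 'rV[k]_d -> 'rV[k]_d -> 'rV[k]_d)
  (bas : 'I_d -> 'rV[k]_d) :
  is_lie_bracket br -> basmx bas \in unitmx ->
  (forall i j, killing br (bas i) (bas j) = (i == j)%:R) ->
  forall (R : 'M[k]_d) i j,
  killing br (bas i) (\row_a ((- R^T) *m invmx (basmx bas)) a j)
  + killing br (\row_a (R *m invmx (basmx bas)) a i) (bas j) = 0.
Proof.
move=> Hb HU Hon R i j.
have HT : (basmx bas)^T \in unitmx by rewrite unitmx_tr.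
rewrite (bas_row bas i) K_rowmx // (bas_row bas j) K_mxrow // (gram_eq Hb HU Hon).
set B := basmx bas.
have E1 : B *m (invmx B *m invmx B^T) *m (- R^T *m invmx B)
          = - (invmx B^T *m R^T *m invmx B).
  by rewrite mulKVmx // mulNmx mulmxN mulmxA.
have E2 : (R *m invmx B)^T *m (invmx B *m invmx B^T) *m B^T
          = invmx B^T *m R^T *m invmx B.
  by rewrite trmx_mul trmx_inv !mulmxA mulmxKV.
by rewrite E1 E2 mxE addNr.
Qed.

Lemma nondeg (k : fieldType) (d : nat) (br : 'rV[k]_d -> 'rV[k]_d -> 'rV[k]_d)
  (bas : 'I_d -> 'rV[k]_d) :
  is_lie_bracket br -> basmx bas \in unitmx ->
  (forall i j, killing br (bas i) (bas j) = (i == j)%:R) ->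
  forall v : 'rV[k]_d, (forall i, killing br (bas i) v = 0) -> v = 0.
Proof.
move=> Hb HU Hon v Hv.
have HT : (basmx bas)^T \in unitmx by rewrite unitmx_tr.
have E : basmx bas *m gram br *m v^T = 0.
  apply/matrixP => i j; rewrite ord1 [RHS]mxE -(Hv i) (bas_row bas i).
  have Ev : \row_a (v^T) a 0 = v by apply/matrixP => ? ?; rewrite !mxE ord1.
  by rewrite -[X in killing _ _ X]Ev K_rowmx.
move: E; rewrite (gram_eq Hb HU Hon) mulKVmx // => E.
apply: trmx_inj; rewrite trmx0.
by rewrite -[v^T](mulKVmx HT) E mulmx0.
Qed.

Lemma casimirE (k : fieldType) (d : nat) (bas : 'I_d -> 'rV[k]_d) :
  casimir bas = (basmx bas)^T *m basmx bas.
Proof.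
apply/matrixP => a b; rewrite /casimir summxE !mxE; apply: eq_bigr => i _.
by rewrite !mxE big_ord1 !mxE.
Qed.

Lemma Negz_eq (q n : nat) : (Negz q == - (n.+1)%:Z) = (q == n).
Proof. by apply/eqP/eqP; lia. Qed.

Lemma Posz_eq (q n : nat) : (Posz q == - (n.+1)%:Z) = false.
Proof. by apply/negbTE/eqP; lia. Qed.

Lemma rcoef_neg (k : fieldType) (d : nat) (bas : 'I_d -> 'rV[k]_d) r0 q n :
  rcoef bas r0 (Negz q) n = if q == n then casimir bas else 0.
Proof. by rewrite /rcoef Negz_eq addr0. Qed.

Lemma rbarcoef_neg (k : fieldType) (d : nat) (bas : 'I_d -> 'rV[k]_d) r0 q n :
  rbarcoef bas r0 (Negz q) n = if q == n then casimir bas else 0.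
Proof. by rewrite /rbarcoef Negz_eq subr0. Qed.

Lemma rcoef_pos (k : fieldType) (d : nat) (bas : 'I_d -> 'rV[k]_d) r0 m n :
  rcoef bas r0 (Posz m) n = r0 m n.
Proof. by rewrite /rcoef Posz_eq add0r. Qed.

Lemma rbarcoef_pos (k : fieldType) (d : nat) (bas : 'I_d -> 'rV[k]_d) r0 m n :
  rbarcoef bas r0 (Posz m) n = - (r0 n m)^T.
Proof. by rewrite /rbarcoef Posz_eq sub0r. Qed.

Lemma scomp_neg (k : fieldType) (d : nat) (bas : 'I_d -> 'rV[k]_d) S :
  basmx bas \in unitmx ->
  (forall q n, S (Negz q) n = if q == n then casimir bas else 0) ->
  forall kk i q, scomp bas S kk i (Negz q) = if q == kk then bas i else 0.
Proof.
move=> HU HS kk i q; rewrite /scomp HS.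
case: eqP => _; last by rewrite mul0mx; apply/matrixP => ? ?; rewrite !mxE.
by rewrite casimirE mulmxK // row_tr rowK.
Qed.

Definition Wg (k : fieldType) (A B : nat) (f : int -> k) : k :=
  \sum_(j < A + B) f (j%:Z - A%:Z).

Lemma Wg_extB (k : fieldType) A B (f : int -> k) :
  (forall p, B%:Z <= p -> f p = 0) -> Wg A B f = Wg A B.+1 f.
Proof.
move=> Hf; rewrite /Wg addnS big_ord_recr /= Hf ?addr0 //; lia.
Qed.

Lemma Wg_extA (k : fieldType) A B (f : int -> k) :
  (forall p, p < - A%:Z -> f p = 0) -> Wg A B f = Wg A.+1 B f.
Proof.
move=> Hf; rewrite /Wg addSn big_ord_recl /= Hf ?add0r; last by lia.
apply: eq_bigr => j _; congr f; rewrite /bump leq0n add1n; lia.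
Qed.

Lemma Wg_ext (k : fieldType) A B A' B' (f : int -> k) :
  (A <= A')%N -> (B <= B')%N ->
  (forall p, p < - A%:Z -> f p = 0) -> (forall p, B%:Z <= p -> f p = 0) ->
  Wg A B f = Wg A' B' f.
Proof.
move=> HA HB HfA HfB.
have E1 : forall n, Wg A B f = Wg (A + n) B f.
  elim=> [|n IH]; first by rewrite addn0.
  rewrite IH addnS Wg_extA // => p Hp; apply: HfA; lia.
have E2 : forall n, Wg A' B f = Wg A' (B + n) f.
  elim=> [|n IH]; first by rewrite addn0.
  rewrite IH addnS Wg_extB // => p Hp; apply: HfB; lia.
by rewrite (E1 (A' - A)%N) subnKC // (E2 (B' - B)%N) subnKC.
Qed.

Lemma Wg_one (k : fieldType) A B (f : int -> k) (p0 : int) :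
  - A%:Z <= p0 -> p0 < B%:Z -> (forall p, p != p0 -> f p = 0) ->
  Wg A B f = f p0.
Proof.
move=> H1 H2 Hf.
have h : (absz (p0 + A%:Z)%R < A + B)%N by lia.
rewrite /Wg (bigD1 (Ordinal h)) //= big1 ?addr0.
  congr f; lia.
move=> j Hj; apply: Hf; apply/negP => /eqP E.
move/negP: Hj; apply; apply/eqP/val_inj => /=; lia.
Qed.

Lemma Wg_add (k : fieldType) A B (f g : int -> k) :
  Wg A B (fun p => f p + g p) = Wg A B f + Wg A B g.
Proof. exact: big_split. Qed.

Lemma Wg_sub (k : fieldType) A B (f g : int -> k) :
  Wg A B (fun p => f p - g p) = Wg A B f - Wg A B g.
Proof. by rewrite /Wg -sumrB. Qed.

Lemma Wg_scale (k : fieldType) A B (c : k) (f : int -> k) :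
  Wg A B (fun p => c * f p) = c * Wg A B f.
Proof. by rewrite /Wg mulr_sumr. Qed.

Lemma Wg_sum (k : fieldType) A B n (F : 'I_n -> int -> k) :
  Wg A B (fun p => \sum_(i < n) F i p) = \sum_(i < n) Wg A B (F i).
Proof. by rewrite /Wg exchange_big. Qed.

Lemma Wg_eq (k : fieldType) A B (f g : int -> k) :
  (forall p, f p = g p) -> Wg A B f = Wg A B g.
Proof. by move=> H; apply: eq_bigr => j _; rewrite H. Qed.

Lemma low_spec (k : fieldType) (d : nat) (f : int -> 'rV[k]_d) :
  laurent f -> forall n : int, n < - (lowbound f)%:Z -> f n = 0.
Proof.
move=> Hf; rewrite /lowbound.
exact: (epsilon_spec (inhabits 0%N)
   (fun N : nat => forall n : int, n < - (N%:Z) -> f n = 0) Hf).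
Qed.

Lemma m1_sub_pos (q : nat) : -1 - Posz q = Negz q.
Proof. rewrite NegzE; lia. Qed.

Lemma m1_sub_neg (q : nat) : -1 - Negz q = Posz q.
Proof. rewrite NegzE; lia. Qed.

Lemma kappa0_Wg (k : fieldType) (d : nat) (br : 'rV[k]_d -> 'rV[k]_d -> 'rV[k]_d) :
  is_lie_bracket br -> forall s t M,
  laurent s -> laurent t -> (lowbound s <= M)%N -> (lowbound t <= M)%N ->
  kappa0 br s t = Wg M M (fun p => killing br (s p) (t (-1 - p))).
Proof.
move=> Hb s t M Hs Ht H1 H2; rewrite /kappa0.
apply: (Wg_ext (f := fun p => killing br (s p) (t (-1 - p)))) => // p Hp.
  by rewrite low_spec // K_0l.
by rewrite (low_spec Ht) ?K_0r //; lia.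
Qed.

Lemma W_sv_t (k : fieldType) (d : nat) (br : 'rV[k]_d -> 'rV[k]_d -> 'rV[k]_d)
  (bas : 'I_d -> 'rV[k]_d) r0 :
  is_lie_bracket br -> basmx bas \in unitmx ->
  forall (t : int -> 'rV[k]_d) m i M,
  (forall p, p < 0 -> t p = 0) -> (m < M)%N ->
  Wg M M (fun p => killing br (scomp bas (rcoef bas r0) m i p) (t (-1 - p)))
  = killing br (bas i) (t (Posz m)).
Proof.
move=> Hb HU t m i M Ht Hm.
have HS := rcoef_neg bas r0.
rewrite (@Wg_one _ _ _ _ (Negz m)); first last.
- case=> q Hq.
    by rewrite m1_sub_pos Ht ?K_0r.
  by rewrite scomp_neg //; case: eqP => [E|_]; [rewrite E eqxx in Hq | rewrite K_0l].
- rewrite NegzE; lia.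
- rewrite NegzE; lia.
by rewrite scomp_neg // eqxx m1_sub_neg.
Qed.

Lemma W_sv_svb (k : fieldType) (d : nat) (br : 'rV[k]_d -> 'rV[k]_d -> 'rV[k]_d)
  (bas : 'I_d -> 'rV[k]_d) r0 :
  is_lie_bracket br -> basmx bas \in unitmx ->
  (forall i j, killing br (bas i) (bas j) = (i == j)%:R) ->
  forall kk i l j M, (kk < M)%N -> (l < M)%N ->
  Wg M M (fun p => killing br (scomp bas (rcoef bas r0) kk i p)
                              (scomp bas (rbarcoef bas r0) l j (-1 - p))) = 0.
Proof.
move=> Hb HU Hon kk i l j M Hk Hl.
have HS := rcoef_neg bas r0.
have HSb := rbarcoef_neg bas r0.
set f := fun p => _.
have E : forall p, f p = (if p == Negz kk then f p else 0)
                         + (if p == Posz l then f p else 0).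
  move=> p; case: eqP => [->|Hk']; first by rewrite addr0.
  case: eqP => [->|Hl']; first by rewrite add0r.
  rewrite addr0 /f; case: p Hk' Hl' => q Hk' Hl'.
    rewrite m1_sub_pos (scomp_neg HU HSb); case: eqP => [E|_]; last by rewrite K_0r.
    by case: Hl'; rewrite E.
  rewrite (scomp_neg HU HS); case: eqP => [E|_]; last by rewrite K_0l.
  by case: Hk'; rewrite E.
rewrite (Wg_eq _ _ E) Wg_add.
rewrite (@Wg_one _ _ _ _ (Negz kk)); first last.
- by move=> p /negbTE ->.
- rewrite NegzE; lia.
- rewrite NegzE; lia.
rewrite (@Wg_one _ _ _ _ (Posz l)); first last.
- by move=> p /negbTE ->.
- lia.
- lia.
rewrite !eqxx /f m1_sub_neg m1_sub_pos (scomp_neg HU HS) (scomp_neg HU HSb) !eqxx.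
rewrite /scomp rbarcoef_pos rcoef_pos.
exact: pairing.
Qed.

Definition comb (k : fieldType) (d : nat) (bas : 'I_d -> 'rV[k]_d)
  (S : int -> nat -> 'M[k]_d) (N : nat) (c : nat -> 'I_d -> k) : int -> 'rV[k]_d :=
  fun p => \sum_(kk < N) \sum_(i < d) c kk i *: scomp bas S kk i p.

Lemma comb_low (k : fieldType) (d : nat) (bas : 'I_d -> 'rV[k]_d) S N c :
  basmx bas \in unitmx ->
  (forall q n, S (Negz q) n = if q == n then casimir bas else 0) ->
  forall p, p < - N%:Z -> comb bas S N c p = 0.
Proof.
move=> HU HS p Hp; case: p Hp => q Hq; first by exfalso; lia.
rewrite /comb big1 // => kk _; rewrite big1 // => i _.
rewrite (scomp_neg HU HS); case: eqP => [E|_]; last by rewrite scaler0.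
by exfalso; have := ltn_ord kk; rewrite NegzE in Hq; lia.
Qed.

Lemma gsp_laurent (k : fieldType) (d : nat) (bas : 'I_d -> 'rV[k]_d) S t :
  basmx bas \in unitmx ->
  (forall q n, S (Negz q) n = if q == n then casimir bas else 0) ->
  gsp bas S t -> laurent t.
Proof.
move=> HU HS [N [c Hc]]; exists N => n Hn; rewrite Hc.
by apply: comb_low HU HS n Hn.
Qed.

Lemma gsp_scomp (k : fieldType) (d : nat) (bas : 'I_d -> 'rV[k]_d) S m i :
  gsp bas S (scomp bas S m i).
Proof.
exists m.+1, (fun kk i' => if (kk == m) && (i' == i) then 1 else 0) => p.
rewrite big_ord_recr /= big1 ?add0r.
  rewrite eqxx (bigD1 i) //= eqxx scale1r big1 ?addr0 // => i' /negbTE ->.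
  by rewrite scale0r.
move=> kk _; rewrite big1 // => i' _.
by rewrite (_ : (widen_ord (leqnSn m) kk == m :> nat) = false) ?scale0r //; apply/negbTE; rewrite /= neq_ltn ltn_ord.
Qed.

Lemma K_subr (k : fieldType) (d : nat) (br : 'rV[k]_d -> 'rV[k]_d -> 'rV[k]_d) :
  is_lie_bracket br -> forall x a b,
  killing br x (a - b) = killing br x a - killing br x b.
Proof.
move=> Hb x a b; rewrite addrC -scaleN1r K_linr // mulN1r addrC //.
Qed.

Lemma Wg_comb_l (k : fieldType) (d : nat) (br : 'rV[k]_d -> 'rV[k]_d -> 'rV[k]_d)
  (bas : 'I_d -> 'rV[k]_d) S N c (u : int -> 'rV[k]_d) M :
  is_lie_bracket br ->
  Wg M M (fun p => killing br (comb bas S N c p) (u (-1 - p)))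
  = \sum_(kk < N) \sum_(i < d) c kk i *
       Wg M M (fun p => killing br (scomp bas S kk i p) (u (-1 - p))).
Proof.
move=> Hb.
transitivity (Wg M M (fun p => \sum_(kk < N) \sum_(i < d) c kk i *
                 killing br (scomp bas S kk i p) (u (-1 - p)))).
  apply: Wg_eq => p; rewrite /comb K_suml //; apply: eq_bigr => kk _.
  rewrite K_suml //; apply: eq_bigr => i _; exact: K_scalel.
rewrite Wg_sum; apply: eq_bigr => kk _; rewrite Wg_sum; apply: eq_bigr => i _.
exact: Wg_scale.
Qed.

Lemma Wg_comb_r (k : fieldType) (d : nat) (br : 'rV[k]_d -> 'rV[k]_d -> 'rV[k]_d)
  (bas : 'I_d -> 'rV[k]_d) S N c (u : int -> 'rV[k]_d) M :
  is_lie_bracket br ->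
  Wg M M (fun p => killing br (u p) (comb bas S N c (-1 - p)))
  = \sum_(kk < N) \sum_(i < d) c kk i *
       Wg M M (fun p => killing br (u p) (scomp bas S kk i (-1 - p))).
Proof.
move=> Hb.
transitivity (Wg M M (fun p => \sum_(kk < N) \sum_(i < d) c kk i *
                 killing br (u p) (scomp bas S kk i (-1 - p)))).
  apply: Wg_eq => p; rewrite /comb K_sumr //; apply: eq_bigr => kk _.
  rewrite K_sumr //; apply: eq_bigr => i _; exact: K_scaler.
rewrite Wg_sum; apply: eq_bigr => kk _; rewrite Wg_sum; apply: eq_bigr => i _.
exact: Wg_scale.
Qed.

Lemma part1a (k : fieldType) (d : nat) (br : 'rV[k]_d -> 'rV[k]_d -> 'rV[k]_d)
  (bas : 'I_d -> 'rV[k]_d) r0 :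
  is_lie_bracket br -> basmx bas \in unitmx ->
  (forall i j, killing br (bas i) (bas j) = (i == j)%:R) ->
  forall t, gsp bas (rbarcoef bas r0) t -> perp br (gsp bas (rcoef bas r0)) t.
Proof.
move=> Hb HU Hon t Ht.
have HS := rcoef_neg bas r0; have HSb := rbarcoef_neg bas r0.
split; first exact: gsp_laurent HU HSb Ht.
move=> s Hs.
have Lt := gsp_laurent HU HSb Ht; have Ls := gsp_laurent HU HS Hs.
case: Hs => N [c Hc]; case: Ht => N' [c' Hc'].
set M := (lowbound s + lowbound t + N + N' + 1)%N.
rewrite (kappa0_Wg Hb (M := M)) //; try (rewrite /M; lia).
rewrite (Wg_eq _ _ (g := fun p => killing br (comb bas (rcoef bas r0) N c p)
                          (comb bas (rbarcoef bas r0) N' c' (-1 - p)))); last first.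
  by move=> p; rewrite Hc Hc'.
rewrite Wg_comb_l //; apply: big1 => kk _; apply: big1 => i _.
rewrite Wg_comb_r // big1 ?mulr0 // => l _; apply: big1 => j _.
rewrite W_sv_svb ?mulr0 //; rewrite /M; have := ltn_ord kk; have := ltn_ord l; lia.
Qed.

Lemma perp_Wg (k : fieldType) (d : nat) (br : 'rV[k]_d -> 'rV[k]_d -> 'rV[k]_d)
  (bas : 'I_d -> 'rV[k]_d) r0 :
  is_lie_bracket br -> basmx bas \in unitmx ->
  forall t m i M, perp br (gsp bas (rcoef bas r0)) t ->
  (lowbound (scomp bas (rcoef bas r0) m i) <= M)%N -> (lowbound t <= M)%N ->
  Wg M M (fun p => killing br (scomp bas (rcoef bas r0) m i p) (t (-1 - p))) = 0.
Proof.
move=> Hb HU t m i M [Lt Hp] H1 H2.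
have HS := rcoef_neg bas r0.
have Hs := gsp_scomp bas (rcoef bas r0) m i.
rewrite -(kappa0_Wg Hb) //; first exact: Hp.
exact: gsp_laurent HU HS Hs.
Qed.

Lemma part1b (k : fieldType) (d : nat) (br : 'rV[k]_d -> 'rV[k]_d -> 'rV[k]_d)
  (bas : 'I_d -> 'rV[k]_d) r0 :
  is_lie_bracket br -> basmx bas \in unitmx ->
  (forall i j, killing br (bas i) (bas j) = (i == j)%:R) ->
  forall t, perp br (gsp bas (rcoef bas r0)) t -> gsp bas (rbarcoef bas r0) t.
Proof.
move=> Hb HU Hon t Hperp.
have HS := rcoef_neg bas r0; have HSb := rbarcoef_neg bas r0.
have Lt : laurent t by case: Hperp.
set N := lowbound t.
set c := fun (kk : nat) (i : 'I_d) => (t (Negz kk) *m invmx (basmx bas)) 0 i.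
set u := comb bas (rbarcoef bas r0) N c.
exists N, c.
have Hneg : forall p, p < 0 -> t p - u p = 0.
  case=> q Hq; first by exfalso; lia.
  case: (ltnP q N) => hq.
    rewrite /u /comb (bigD1 (Ordinal hq)) //= [\sum_(i < N | _) _]big1 ?addr0.
      under eq_bigr => i _ do rewrite (scomp_neg HU HSb) eqxx.
      rewrite /c -[X in X - _](mulmxKV HU (t (Negz q))) mulmx_sum_row.
      by apply/eqP; rewrite subr_eq0; apply/eqP; apply: eq_bigr => i _; rewrite rowK.
    move=> kk Hkk; rewrite big1 // => i _.
    rewrite (scomp_neg HU HSb); case: eqP => [E|_]; last by rewrite scaler0.
    by move/eqP: Hkk; case; apply: val_inj; rewrite /= E.
  rewrite (low_spec Lt); last by rewrite NegzE; lia.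
  by rewrite /u (comb_low _ HU HSb) ?subrr //; rewrite NegzE; lia.
have Hpos : forall m : nat, t (Posz m) - u (Posz m) = 0.
  move=> m; apply: (nondeg Hb HU Hon) => i.
  set M := (lowbound (scomp bas (rcoef bas r0) m i) + N + m + 1)%N.
  rewrite -(@W_sv_t _ _ br bas r0 Hb HU (fun p => t p - u p) m i M) //; last by rewrite /M; lia.
  rewrite (Wg_eq _ _ (g := fun p =>
     killing br (scomp bas (rcoef bas r0) m i p) (t (-1 - p)) -
     killing br (scomp bas (rcoef bas r0) m i p) (u (-1 - p)))); last first.
    by move=> p; rewrite K_subr.
  rewrite Wg_sub (perp_Wg Hb HU Hperp); try (rewrite /M /N; lia).
  rewrite /u Wg_comb_r // big1 ?subrr // => kk _; apply: big1 => j _.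
  rewrite W_sv_svb ?mulr0 //; rewrite /M; have := ltn_ord kk; lia.
move=> p; apply/eqP; rewrite -subr_eq0; apply/eqP.
case: p => m; first exact: Hpos.
by apply: Hneg; rewrite NegzE; lia.
Qed.

Lemma gsp_ext (k : fieldType) (d : nat) (bas : 'I_d -> 'rV[k]_d) S S' t :
  (forall p n, S p n = S' p n) -> gsp bas S t -> gsp bas S' t.
Proof.
move=> E [N [c H]]; exists N, c => p; rewrite H.
apply: eq_bigr => kk _; apply: eq_bigr => i _; by rewrite /scomp E.
Qed.

Lemma skew_back (k : fieldType) (d : nat) (br : 'rV[k]_d -> 'rV[k]_d -> 'rV[k]_d)
  (bas : 'I_d -> 'rV[k]_d) r0 :
  is_lie_bracket br -> basmx bas \in unitmx ->
  (forall i j, killing br (bas i) (bas j) = (i == j)%:R) ->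
  (forall t, perp br (gsp bas (rcoef bas r0)) t <-> gsp bas (rcoef bas r0) t) ->
  skew_symmetric bas r0.
Proof.
move=> Hb HU Hon H p n.
have HS := rcoef_neg bas r0; have HSb := rbarcoef_neg bas r0.
case: p => [m|q]; last by rewrite rbarcoef_neg rcoef_neg.
have Hw : forall i, scomp bas (rcoef bas r0) n i (Posz m)
                    = scomp bas (rbarcoef bas r0) n i (Posz m).
  move=> i; apply/eqP; rewrite -subr_eq0; apply/eqP.
  apply: (nondeg Hb HU Hon) => i'.
  set w := fun p => scomp bas (rcoef bas r0) n i p - scomp bas (rbarcoef bas r0) n i p.
  set M := (lowbound (scomp bas (rcoef bas r0) m i')
            + lowbound (scomp bas (rcoef bas r0) n i)
            + lowbound (scomp bas (rbarcoef bas r0) n i) + m + 1)%N.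
  rewrite -(@W_sv_t _ _ br bas r0 Hb HU w m i' M); first last.
  - by rewrite /M; lia.
  - case=> q Hq; first by exfalso; lia.
    by rewrite /w (scomp_neg HU HS) (scomp_neg HU HSb) subrr.
  rewrite (Wg_eq _ _ (g := fun p =>
     killing br (scomp bas (rcoef bas r0) m i' p) (scomp bas (rcoef bas r0) n i (-1 - p)) -
     killing br (scomp bas (rcoef bas r0) m i' p) (scomp bas (rbarcoef bas r0) n i (-1 - p))));
    last by move=> p; rewrite K_subr.
  rewrite Wg_sub (perp_Wg Hb HU); first rewrite (perp_Wg Hb HU) ?subrr //.
  - exact: part1a (gsp_scomp _ _ _ _).
  - by rewrite /M; lia.
  - by rewrite /M; lia.
  - exact: (H _).2 (gsp_scomp _ _ _ _).
  - by rewrite /M; lia.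
  - by rewrite /M; lia.
have E : rcoef bas r0 m n *m invmx (basmx bas) = rbarcoef bas r0 m n *m invmx (basmx bas).
  apply/matrixP => a i; have := congr1 (fun v : 'rV[k]_d => v 0 a) (Hw i).
  by rewrite /scomp !mxE.
by rewrite -(mulmxKV HU (rcoef bas r0 m n)) E mulmxKV.
Qed.

Theorem lemma1p19 (k : fieldType) (d : nat)
  (br : 'rV[k]_d -> 'rV[k]_d -> 'rV[k]_d) (bas : 'I_d -> 'rV[k]_d)
  (r0 : nat -> nat -> 'M[k]_d) :
  [pchar k] =i pred0 ->
  is_lie_bracket br ->
  semisimple br ->
  basmx bas \in unitmx ->
  (forall i j, killing br (bas i) (bas j) = (i == j)%:R) ->
  gen_rmatrix br bas r0 ->
  (forall t, perp br (gsp bas (rcoef bas r0)) t <-> gsp bas (rbarcoef bas r0) t)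
  /\
  (skew_symmetric bas r0 <->
     (forall t, perp br (gsp bas (rcoef bas r0)) t <-> gsp bas (rcoef bas r0) t)).
Proof.
move=> _ Hb _ HU Hon _.
have P1 : forall t, perp br (gsp bas (rcoef bas r0)) t <-> gsp bas (rbarcoef bas r0) t.
  by move=> t; split; [exact: part1b | exact: part1a].
split => //; split.
  move=> Hsk t; rewrite P1; split; apply: gsp_ext => p n; by rewrite Hsk.
exact: skew_back.
Qed.
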